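(* Let $G$ be a finite group and $N\trianglelefteq G$. Then \[ \gamma^{\mathrm{s}}_{\mathrm{cp}}(G)\le\gamma^{\mathrm{ss}}_{\mathrm{cp}}(N)+\gamma^{\mathrm{s}}_{\mathrm{cp}}(G/N). \]
   Context: For $A\le G$, $\gamma^A_{\mathrm{cp}}(G)$ is the smallest $k$ such that $G=A_1\cdots A_k$ (setwise) with each $A_i$ conjugate to $A$ in $G$ ($\infty$ if none). $\gamma^{\mathrm{s}}_{\mathrm{cp}}(G):=\min\{\gamma^A_{\mathrm{cp}}(G): A\le G\text{ solvable}\}$. A factorization $G=A_1\cdots A_k$ by conjugates of $A$ is a special solvable cp-factorization if (i) $A$ is solvable, (ii) $N_G(A)=A$, and (iii) for every $\alpha\in\mathrm{Aut}(G)$ there is $g\in G$ with $A^\alpha=A^g$; $\gamma^{\mathrm{ss}}_{\mathrm{cp}}(G)$ is the minimal length of such a factorization. *)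

(* Defs.v *)
From Stdlib Require Import ClassicalEpsilon.
From mathcomp Require Import all_boot all_fingroup all_solvable.
Set Implicit Arguments. Unset Strict Implicit. Unset Printing Implicit Defensive.

Local Open Scope group_scope.

(* extended naturals N ∪ {∞} as option nat, None = ∞ *)
Definition omin (x y : option nat) : option nat :=
  match x, y with
  | None, _ => y
  | _, None => x
  | Some a, Some b => Some (minn a b)
  end.

Definition oadd (x y : option nat) : option nat :=
  match x, y with
  | Some a, Some b => Some (a + b)%N
  | _, _ => None
  end.

Definition ole (x y : option nat) : Prop :=
  match x, y with
  | _, None => True
  | None, Some _ => False
  | Some a, Some b => (a <= b)%N
  end.

Section CP.
Variable gT : finGroupType.

Definition cp_fact (A G : {set gT}) (k : nat) : bool :=
  [exists s : k.-tuple gT,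
     all (fun g => g \in G) s && (G == \prod_(g <- s) (A :^ g))].

Definition cp_pred (A G : {set gT}) : pred nat := fun k => (0 < k)%N && cp_fact A G k.

Definition gamma_cp (A G : {set gT}) : option nat :=
  match excluded_middle_informative (exists k, cp_pred A G k) with
  | left h => Some (ex_minn h)
  | right _ => None
  end.

Definition gamma_s (G : {group gT}) : option nat :=
  \big[omin/None]_(A : {group gT} | (A \subset G) && solvable A) gamma_cp A G.

Definition special_sub (A G : {group gT}) : bool :=
  [&& A \subset G, solvable A, 'N_G(A) == A &
      [forall a in Aut G, [exists g in G, (a @: A) == A :^ g]]].

Definition gamma_ss (G : {group gT}) : option nat :=
  \big[omin/None]_(A : {group gT} | special_sub A G) gamma_cp A G.

End CP.

(* Main.v *)
Require Import Defs.
From Stdlib Require Import ClassicalEpsilon.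
From mathcomp Require Import all_boot all_fingroup all_solvable.
Set Implicit Arguments. Unset Strict Implicit. Unset Printing Implicit Defensive.
Local Open Scope group_scope.

Lemma ole_trans x y z : ole x y -> ole y z -> ole x z.
Proof. by case: x; case: y; case: z => //= a b c; apply: leq_trans. Qed.

Lemma ole_ominl x y : ole (omin x y) x.
Proof. by case: x; case: y => //= *; rewrite ?geq_minl ?geq_minr. Qed.
Lemma ole_ominr x y : ole (omin x y) y.
Proof. by case: x; case: y => //= *; rewrite ?geq_minl ?geq_minr. Qed.

Lemma bigomin_le (I : eqType) (r : seq I) (P : pred I) F i :
  i \in r -> P i -> ole (\big[omin/None]_(j <- r | P j) F j) (F i).
Proof.
elim: r => //= j r IH; rewrite inE big_cons => /orP[/eqP<- Pi|ir Pi].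
  by rewrite Pi; apply: ole_ominl.
case: ifP => _; last exact: IH.
exact: ole_trans (ole_ominr _ _) (IH ir Pi).
Qed.

Lemma bigomin_some (I : Type) (r : seq I) (P : pred I) F m :
  \big[omin/None]_(j <- r | P j) F j = Some m -> exists2 i, P i & F i = Some m.
Proof.
elim: r m => [|j r IH] m; first by rewrite big_nil.
rewrite big_cons; case: ifP => Pj; last exact: IH.
case E1: (F j) => [a|]; case E2: (\big[omin/None]_(j <- r | P j) F j) => [b|] //=.
- case=> <-; case: (leqP a b) => ab.
    by exists j => //; rewrite E1 (minn_idPl ab).
  by have [i Pi Fi] := IH _ E2; exists i => //; rewrite Fi (minn_idPr (ltnW ab)).
- by case=> <-; exists j.
- by move=> e; apply: IH; rewrite E2.
Qed.

Section G.
Variable gT : finGroupType.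

Lemma gamma_cp_some (A G : {set gT}) m : gamma_cp A G = Some m -> cp_pred A G m.
Proof.
rewrite /gamma_cp; case: excluded_middle_informative => // h [<-].
by case: ex_minnP.
Qed.

Lemma gamma_cp_le (A G : {set gT}) m : cp_pred A G m -> ole (gamma_cp A G) (Some m).
Proof.
move=> Pm; rewrite /gamma_cp; case: excluded_middle_informative => [h|[]]; last by exists m.
by case: ex_minnP => n _ /(_ m Pm).
Qed.

Lemma prod_subS (r : seq gT) (X Y : {set gT}) : X \subset Y ->
  \prod_(g <- r) X :^ g \subset \prod_(g <- r) Y :^ g.
Proof.
move=> sXY; elim: r => [|g r IH]; first by rewrite !big_nil.
by rewrite !big_cons mulgSS // conjSg.
Qed.

Lemma prod_subG (r : seq gT) (X : {set gT}) (G : {group gT}) : X \subset G ->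
  all (fun g => g \in G) r -> \prod_(g <- r) X :^ g \subset G.
Proof.
move=> sXG; elim: r => [|g r IH]; first by rewrite big_nil sub1G.
rewrite big_cons /= => /andP[Gg Hr]; rewrite mul_subG ?IH //.
by rewrite -(conjGid Gg) conjSg.
Qed.

Lemma prod_quo (N : {group gT}) (r : seq gT) (X : {set gT}) : X \subset 'N(N) ->
  all (fun g => g \in 'N(N)) r ->
  (\prod_(g <- r) X :^ g) / N = \prod_(g <- r) (X / N) :^ coset N g.
Proof.
move=> sXG; elim: r => [|g r IH]; first by rewrite !big_nil quotient1.
rewrite !big_cons /= => /andP[Gg Hr]; rewrite quotientMl ?IH ?quotientJ //.
by rewrite -(conjGid Gg) conjSg.
Qed.
End G.

Theorem lemma14 (gT : finGroupType) (G N : {group gT}) (nNG : N <| G) :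
  ole (gamma_s G) (oadd (gamma_ss N) (gamma_s (G / N)%G)).
Proof.
case Ess: (gamma_ss N) => [a|]; last by case: (gamma_s G).
case Es: (gamma_s (G/N)%G) => [b|]; last by case: (gamma_s G).
have [A spA EA] := bigomin_some Ess.
have [Bb /andP[sBG solB] EB] := bigomin_some Es.
move/gamma_cp_some: EA => /andP[a0 /existsP[s /andP[sN /eqP defN]]].
move/gamma_cp_some: EB => /andP[b0 /existsP[t /andP[tG /eqP defGN]]].
case/and4P: spA => sAN solA /eqP nAN /forallP autA.
have [sNG nNG'] := andP nNG.
have frat : forall g, g \in G -> exists2 h, h \in 'N_G(A) & coset N h = coset N g.
  move=> g Gg; have nNg : g \in 'N(N) := subsetP nNG' g Gg.
  have := autA (conj_aut N g); rewrite Aut_aut /= => /existsP[n /andP[Nn /eqP e]].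
  have e2 : A :^ g = A :^ n.
    rewrite -e; apply: eq_in_imset => x Ax /=.
    by rewrite norm_conj_autE // (subsetP sAN).
  exists (g * n^-1); last by rewrite coset_kerr // groupV.
  rewrite inE groupM ?groupV ?(subsetP sNG n Nn) //=.

  by apply/normP; rewrite conjsgM e2 -conjsgM mulgV conjsg1.
pose K := ('N_G(A) :&: coset N @*^-1 Bb)%G.
pose f := fun x => odflt 1 [pick h in 'N_G(A) | coset N h == x].
have hf : forall x, f x \in 'N_G(A).
  by move=> x; rewrite /f; case: pickP => [h /andP[]|] //= _; apply: group1.

have hfc : forall x, x \in G / N -> coset N (f x) = x.
  move=> x /morphimP[y _ Gy ->]; have [h Hh ehg] := frat y Gy.
  rewrite /f; case: pickP => [h' /andP[_ /eqP] //|/(_ h)].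
  by rewrite Hh ehg eqxx.
have sKG : K \subset G by rewrite subIset // subsetIl.
have sAK : A \subset K.
  rewrite subsetI subsetI normG (subset_trans sAN sNG) /=.

  exact: subset_trans sAN (sub_cosetpre Bb).
have nNK : K \subset 'N(N) := subset_trans sKG nNG'.
have sKNB : K / N \subset Bb by rewrite -(cosetpreK Bb) quotientS // subsetIr.
have solK : solvable K.
  rewrite (series_sol (normalGI sKG nNG)); apply/andP; split.
    apply: solvableS solA; apply/subsetP => x /setIP[/setIP[/setIP[_ nx] _] Nx].
    by rewrite -nAN inE Nx.

  have eKN : (K :&: N)%G = (N :&: K)%G by apply/val_inj; rewrite /= setIC.
  by rewrite eKN (isog_sol (second_isog nNK)) (solvableS sKNB).
have sBKN : Bb \subset K / N.
  apply/subsetP => x Bx; have GNx := subsetP sBG x Bx.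
  have Nf : f x \in 'N(N) by rewrite (subsetP nNG') // (subsetP (subsetIl _ _) _ (hf x)).
  suff: coset N (f x) \in K / N by rewrite hfc.
  rewrite mem_quotient // inE hf /=; apply: mem_morphpre => //.
  by have := hfc x GNx; rewrite /= => ->.
have hK : ole (gamma_s G) (gamma_cp K G).
  by rewrite /gamma_s; apply: bigomin_le (mem_index_enum _) _; rewrite /= sKG solK.
apply: ole_trans hK _.
apply: gamma_cp_le; rewrite /cp_pred addn_gt0 a0 /=.
apply/existsP; exists [tuple of s ++ map f t].
have fG : all (fun g => g \in G) (map f t).
  by apply/allP => _ /mapP[x _ ->]; rewrite (subsetP (subsetIl _ _) _ (hf x)).
have sG : all (fun g => g \in G) s by apply/allP => g /(allP sN)/(subsetP sNG).
have sNN' : N \subset \prod_(i <- s) K :^ i.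
  by rewrite {1}defN; apply: prod_subS.
rewrite /= all_cat sG fG /= big_cat /= eqEsubset mul_subG ?prod_subG //= andbT.
apply: (subset_trans (_ : G \subset N * _)); last by apply: mulSg.
rewrite -quotientSK // prod_quo //; last first.
  by apply/allP => g /(allP fG)/(subsetP nNG').
rewrite big_map defGN.
have -> : \prod_(j <- t) (K / N) :^ coset N (f j) = \prod_(j<-t) (K/N) :^ j.
  by apply: eq_big_seq => x /(allP tG)/hfc ->.
exact: prod_subS.
Qed.
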